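(* Let $S$ be a compact Hausdorff space and $K\subset S$ a closed subset which is a retract of $S$ and is a zero-set of $S$. Then there exists a U-embedding from $C(K)$ into $C(S)$.
   Context: $C(K)$, $C(S)$ carry the sup norm. $K$ is a retract of $S$ if there is a continuous onto $r\colon S\to K$ with $r(k)=k$ for all $k\in K$. $K$ is a zero-set of $S$ if $K=\{t\in S: f(t)=0\}$ for some $f\in C(S)$. A linear isometry $T\colon X\to Y$ is a U-embedding if every $x^*\in X^*$ has a unique $y^*\in Y^*$ with $T^*(y^* )=x^*$ and $\|y^*\|=\|x^*\|$. *)

(* Defs.v *)
From HB Require Import structures.
From mathcomp Require Import all_boot all_order all_algebra.
From mathcomp Require Import all_classical all_reals all_analysis.
Set Implicit Arguments. Unset Strict Implicit. Unset Printing Implicit Defensive.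
Import Order.TTheory GRing.Theory Num.Theory numFieldNormedType.Exports.
Local Open Scope classical_set_scope.
Local Open Scope ring_scope.

Definition subK (S : topologicalType) (K : set S) : Type := {x : S | K x}.
HB.instance Definition _ (S : topologicalType) (K : set S) :=
  gen_eqMixin (subK K).
HB.instance Definition _ (S : topologicalType) (K : set S) :=
  gen_choiceMixin (subK K).

Definition Ktop (S : topologicalType) (K : set S) : topologicalType :=
  initial_topology (@proj1_sig S K : subK K -> S).

(* C(X) = continuous real functions on X; sup norm. *)
Definition supnorm (R : realType) (X : topologicalType) (f : X -> R) : R :=
  sup [set `|f x| | x in [set: X]].

Definition bdd_functional (R : realType) (X : topologicalType)
    (phi : (X -> R) -> R) : Prop :=
  (forall (a : R) (f g : X -> R), continuous f -> continuous g ->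
     phi (fun x => a * f x + g x) = a * phi f + phi g) /\
  exists M : R, forall f : X -> R, continuous f -> `|phi f| <= M * supnorm f.

Definition fnorm (R : realType) (X : topologicalType)
    (phi : (X -> R) -> R) : R :=
  sup [set `|phi f| | f in [set f : X -> R | continuous f /\ supnorm f <= 1]].

Definition feq (R : realType) (X : topologicalType)
    (phi psi : (X -> R) -> R) : Prop :=
  forall f : X -> R, continuous f -> phi f = psi f.

Definition lin_isometry (R : realType) (X Y : topologicalType)
    (T : (X -> R) -> (Y -> R)) : Prop :=
  (forall f, continuous f -> continuous (T f)) /\
  (forall (a : R) (f g : X -> R), continuous f -> continuous g ->
     T (fun x => a * f x + g x) = (fun y => a * T f y + T g y)) /\
  (forall f, continuous f -> supnorm (T f) = supnorm f).

(* U-embedding: every x^* has a unique norm-preserving y^* with T^* y^* = x^*,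
   where T^* y^* = y^* \o T. *)
Definition U_embedding (R : realType) (X Y : topologicalType)
    (T : (X -> R) -> (Y -> R)) : Prop :=
  lin_isometry T /\
  forall xs : (X -> R) -> R, bdd_functional xs ->
    exists ys : (Y -> R) -> R,
      [/\ bdd_functional ys, feq (fun f => ys (T f)) xs,
          fnorm ys = fnorm xs &
          forall zs : (Y -> R) -> R, bdd_functional zs ->
            feq (fun f => zs (T f)) xs -> fnorm zs = fnorm xs -> feq zs ys].

Definition is_retract (S : topologicalType) (K : set S) : Prop :=
  exists r : S -> S, [/\ continuous r, range r = K & forall k, K k -> r k = k].

Definition is_zero_set (R : realType) (S : topologicalType) (K : set S) : Prop :=
  exists f : S -> R, continuous f /\ K = f @^-1` [set 0].

(* Main.v *)
Require Import Defs.
From HB Require Import structures.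
From mathcomp Require Import all_boot all_order all_algebra.
From mathcomp Require Import all_classical all_reals all_analysis.
From mathcomp Require Import lra ring.
Import Order.TTheory GRing.Theory Num.Theory numFieldNormedType.Exports.
Set Implicit Arguments. Unset Strict Implicit. Unset Printing Implicit Defensive.
Local Open Scope classical_set_scope.
Local Open Scope ring_scope.
Section Cont.
Context {R : realType} {X : topologicalType}.
Implicit Types f g : X -> R.
Lemma cD f g : continuous f -> continuous g -> continuous (fun x => f x + g x).
Proof. by move=> hf hg x; exact: (continuousD (hf x) (hg x)). Qed.
Lemma cM f g : continuous f -> continuous g -> continuous (fun x => f x * g x).
Proof. by move=> hf hg x; exact: (continuousM (hf x) (hg x)). Qed.
Lemma cB f g : continuous f -> continuous g -> continuous (fun x => f x - g x).
Proof. by move=> hf hg x; exact: (continuousB (hf x) (hg x)). Qed.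
Lemma cC (c : R) : continuous (fun _ : X => c).
Proof. exact: cst_continuous. Qed.
Lemma cZ (c : R) f : continuous f -> continuous (fun x => c * f x).
Proof. by move=> hf; apply: cM => //; exact: cC. Qed.
Lemma cN f : continuous f -> continuous (fun x => `|f x|).
Proof. by move=> hf x; apply: (continuous_comp (hf x)); exact: norm_continuous. Qed.
Lemma cV f : (forall x, f x != 0) -> continuous f -> continuous (fun x => (f x)^-1).
Proof. by move=> nz hf x; exact: (continuousV (nz x) (hf x)). Qed.
End Cont.

Lemma cont_bnd (R : realType) (S : topologicalType) (h : S -> R) :
  compact [set: S] -> continuous h -> exists C : R, forall s, `|h s| <= C.
Proof.
move=> cS ch.
have : compact (h @` setT) by apply: continuous_compact => //; exact: continuous_subspaceT.
move=> /compact_bounded [M [Mr HM]].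
exists (M + 1) => s; apply: (HM (M+1)); first lra.
by exists s.
Qed.

Section Sup.
Context {R : realType} {X : topologicalType}.
Implicit Types f g : X -> R.

Lemma supnorm_ge0 f : 0 <= supnorm f.
Proof.
rewrite /supnorm.
have [hs|nhs] := pselect (has_sup [set `|f x| | x in [set: X]]); last by rewrite sup_out.
case: (hs) => [[y [x _ _]] _].
apply: le_trans (normr_ge0 (f x)) _.
by apply: sup_upper_bound => //; exists x.
Qed.

Lemma supnorm_ge f (C : R) x : (forall y, `|f y| <= C) -> `|f x| <= supnorm f.
Proof.
move=> hC; apply: sup_upper_bound; last by exists x.
split; first by exists `|f x|; exists x.
by exists C => _ [y _ <-].
Qed.

Lemma supnorm_le f (c : R) : 0 <= c -> (forall x, `|f x| <= c) -> supnorm f <= c.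
Proof.
move=> c0 hc; rewrite /supnorm.
have [ne|e0] := pselect ([set `|f x| | x in [set: X]] !=set0).
  by apply: ge_sup => // _ [y _ <-].
suff -> : [set `|f x| | x in [set: X]] = set0 by rewrite sup0.
by apply/seteqP; split => y Ey //; exfalso; apply: e0; exists y.
Qed.

Section Fn.
Variable phi : (X -> R) -> R.
Hypothesis phib : bdd_functional phi.

Lemma phi_lin a f g : continuous f -> continuous g ->
  phi (fun x => a * f x + g x) = a * phi f + phi g.
Proof. by case: phib => L _; apply: L. Qed.

Lemma phi0 : phi (fun _ => 0) = 0.
Proof.
have := phi_lin 1 (@cC R X 0) (@cC R X 0).
have -> : (fun _ : X => 1 * (0:R) + 0) = (fun _ => 0).
  by apply/funext => x; rewrite mulr0 addr0.
rewrite mul1r => h; lra.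
Qed.

Lemma phiZ a f : continuous f -> phi (fun x => a * f x) = a * phi f.
Proof.
move=> hf; have := phi_lin a hf (@cC R X 0).
have -> : (fun x => a * f x + 0) = (fun x => a * f x).
  by apply/funext => x; rewrite addr0.
by rewrite phi0 addr0.
Qed.

Lemma phiD f g : continuous f -> continuous g -> phi (fun x => f x + g x) = phi f + phi g.
Proof.
move=> hf hg; have := phi_lin 1 hf hg.
have -> : (fun x => 1 * f x + g x) = (fun x => f x + g x).
  by apply/funext => x; rewrite mul1r.
by rewrite mul1r.
Qed.

Let E := [set `|phi f| | f in [set f : X -> R | continuous f /\ supnorm f <= 1]].

Lemma E_has_sup : has_sup E.
Proof.
case: phib => _ [M HM]; split.
  exists `|phi (fun _ => 0)|; exists (fun _ => 0) => //; split; first exact: cC.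
  by apply: supnorm_le => // x; rewrite normr0.
exists `|M| => _ [f [fc fn] <-].
apply: le_trans (HM f fc) _.
have s0 := supnorm_ge0 f.
apply: le_trans (ler_wpM2r s0 (ler_norm M)) _.
by rewrite -[leRHS]mulr1; apply: ler_wpM2l.
Qed.

Lemma fnorm_ub f : continuous f -> supnorm f <= 1 -> `|phi f| <= fnorm phi.
Proof. by move=> fc fn; apply: sup_upper_bound; [exact: E_has_sup|exists f]. Qed.

Lemma fnorm_ge0 : 0 <= fnorm phi.
Proof.
apply: le_trans (normr_ge0 (phi (fun _ => 0))) _; apply: fnorm_ub; first exact: cC.
by apply: supnorm_le => // x; rewrite normr0.
Qed.

Lemma fnorm_le (c : R) : 0 <= c ->
  (forall f, continuous f -> supnorm f <= 1 -> `|phi f| <= c) -> fnorm phi <= c.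
Proof.
move=> c0 hc; apply: ge_sup; first by case: E_has_sup.
by move=> _ [f [fc fn] <-]; apply: hc.
Qed.

Lemma fnorm_approx (e : R) : 0 < e ->
  exists f, [/\ continuous f, supnorm f <= 1 & fnorm phi - e < `|phi f|].
Proof.
move=> e0; have [_ [f [fc fn] <-] H] := sup_adherent e0 E_has_sup.
by exists f.
Qed.

Lemma fnorm_bound f (C : R) : continuous f -> (forall x, `|f x| <= C) ->
  `|phi f| <= fnorm phi * supnorm f.
Proof.
move=> fc fC; have s0 := supnorm_ge0 f.
have [sz|sp] := eqVneq (supnorm f) 0.
  have -> : f = (fun _ => 0).
    apply/funext => x; apply/eqP; rewrite -normr_eq0 eq_le normr_ge0 andbT.
    by rewrite -sz; apply: (supnorm_ge x fC).
  by rewrite phi0 normr0; apply: mulr_ge0; [exact: fnorm_ge0|exact: supnorm_ge0].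
have s0' : 0 < supnorm f by rewrite lt_neqAle eq_sym sp.
have := fnorm_ub (cZ (c := (supnorm f)^-1) fc).
rewrite phiZ // normrM ger0_norm ?invr_ge0 //.
rewrite ler_pdivrMl // mulrC; apply.
apply: supnorm_le => // x; rewrite normrM ger0_norm ?invr_ge0 //.
by rewrite ler_pdivrMl // mulr1; apply: supnorm_ge fC.
Qed.
End Fn.
End Sup.

Lemma clamp_facts (R : realType) (e x : R) : 0 < e ->
  let c := (`|x + e| - `|x - e|) / 2 in
  [/\ `|c| <= e, (`|x| <= e -> x - c = 0) & `|x - c| <= `|x|].
Proof.
move=> e0 c.
have cv : (e <= x /\ c = e) \/ (- e <= x <= e /\ c = x) \/ (x <= - e /\ c = - e).
  rewrite /c.
  have [h1|h1] := lerP 0 (x + e); have [h2|h2] := lerP 0 (x - e);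
  rewrite ?(ger0_norm h1) ?(ltr0_norm h1) ?(ger0_norm h2) ?(ltr0_norm h2).
  - left; split; [lra|]. lra.
  - right; left; split; [apply/andP; split; lra|]. lra.
  - lra.
  - right; right; split; [lra|]. lra.
case: cv => [[h ->]|[[/andP[h1 h2] ->]|[h ->]]].
- rewrite (gtr0_norm e0) (ger0_norm (_ : 0 <= x)); last lra.
  rewrite ger0_norm; last lra.
  split; [lra| |lra]. move=> h'; lra.
  have hx : `|x| <= e by rewrite ler_norml h1 h2.
  by rewrite subrr normr0; split.
- rewrite normrN (gtr0_norm e0) (ltr0_norm (_ : x < 0)); last lra.
  rewrite opprK ler0_norm; last lra.
  split; [lra| |lra]. move=> h'; lra.
Qed.

Lemma eps_id (R : realType) (N d : R) :
  N * (d / (2 * (N + 1))) = (d / 2) * (N / (N + 1)).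
Proof. rewrite invfM; ring. Qed.

Unset Implicit Arguments.
Set Strict Implicit.

Theorem proposition6p24 (R : realType) (S : topologicalType) (K : set S) :
  compact [set: S] -> hausdorff_space S -> closed K ->
  is_retract K -> is_zero_set R K ->
  exists T : (Ktop K -> R) -> (S -> R), U_embedding T.
Proof.
move=> cS _ _ [r [rc rr rid]] [g0 [g0c Kg]].
have rK : forall s, K (r s) by move=> s; rewrite -rr; exists s.
pose r' : S -> Ktop K := fun s => exist _ (r s) (rK s).
have r'c : continuous r'.
  exact: (@continuous_comp_initial (subK K) S S (@proj1_sig S K) r' rc).
have valc : continuous (@proj1_sig S K : Ktop K -> S).
  exact: (@initial_continuous (subK K) S (@proj1_sig S K)).
have r'val : forall k : Ktop K, r' (proj1_sig k) = k.
  case=> x Kx; rewrite /r' /=; move: (rK x); rewrite (rid x Kx) => p.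
  by congr exist; exact: Prop_irrelevance.
pose phi s := (1 + `|g0 s|)^-1.
have phi_pos s : 0 < 1 + `|g0 s| by have := normr_ge0 (g0 s); lra.
have phi0 s : 0 <= phi s by rewrite /phi invr_ge0 ltW.
have phi1 s : phi s <= 1 by rewrite /phi invr_le1 // ?unitfE ?gt_eqF //; have := normr_ge0 (g0 s); lra.
have phiK s : K s -> phi s = 1.
  by rewrite Kg /= /phi => ->; rewrite normr0 addr0 invr1.
have phic : continuous phi.
  apply: cV; first by move=> s; rewrite gt_eqF.
  by apply: cD; [exact: cC | apply: cN].
pose T (f : Ktop K -> R) : S -> R := fun s => f (r' s) * phi s.
have TK f (k : Ktop K) : T f (proj1_sig k) = f k.
  by rewrite /T r'val phiK ?mulr1 //; exact: (proj2_sig k).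
have Tc (f : Ktop K -> R) : continuous f -> continuous (T f).
  move=> fc; apply: cM => //.
  by move=> s; apply: continuous_comp; [exact: r'c | exact: fc].
have fbnd (f : Ktop K -> R) : continuous f -> exists C, forall k : Ktop K, `|f k| <= C.
  move=> fc; have [C HC] := cont_bnd cS (Tc f fc).
  by exists C => k; rewrite -TK.
have Tabs (f : Ktop K -> R) s : continuous f -> `|T f s| <= supnorm f * phi s.
  move=> fc; have [C HC] := fbnd f fc.
  rewrite /T normrM (ger0_norm (phi0 s)); apply: ler_wpM2r => //.
  exact: supnorm_ge HC.
have Tnorm (f : Ktop K -> R) : continuous f -> supnorm (T f) = supnorm f.
  move=> fc; apply/le_anti/andP; split.
    apply: supnorm_le; first exact: supnorm_ge0.
    move=> s; apply: le_trans (Tabs f s fc) _.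
    by rewrite -[leRHS]mulr1; apply: ler_wpM2l => //; exact: supnorm_ge0.
  apply: supnorm_le; first exact: supnorm_ge0.
  have [C HC] := cont_bnd cS (Tc f fc).
  by move=> k; rewrite -TK; exact: supnorm_ge HC.
pose res (h : S -> R) : Ktop K -> R := fun k => h (proj1_sig k).
have resc (h : S -> R) : continuous h -> continuous (res h).
  by move=> hc k; apply: continuous_comp; [exact: valc | exact: hc].
have resn (h : S -> R) : continuous h -> supnorm (res h) <= supnorm h.
  move=> hc; have [C HC] := cont_bnd cS hc.
  apply: supnorm_le; first exact: supnorm_ge0.
  by move=> k; exact: supnorm_ge HC.
have resT (f : Ktop K -> R) : res (T f) = f by apply/funext => k; rewrite /res TK.
exists T; split.
  split; first exact: Tc.
  split; last exact: Tnorm.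
  move=> a f g fc gc; apply/funext => s; rewrite /T /=.
  by rewrite mulrDl mulrA.
move=> xs xsb.
exists (fun h => xs (res h)).
have ysb : bdd_functional (fun h => xs (res h)).
  split.
    by move=> a h1 h2 h1c h2c; exact: (phi_lin xsb a (resc h1 h1c) (resc h2 h2c)).
  exists (fnorm xs) => h hc.
  have [C HC] := cont_bnd cS hc.
  apply: le_trans (fnorm_bound xsb (resc h hc) (fun k => HC (proj1_sig k))) _.
  by apply: ler_wpM2l; [exact: (fnorm_ge0 xsb) | exact: (resn h hc)].
split => //.
- by move=> f fc /=; rewrite resT.
- apply/le_anti/andP; split.
    apply: (fnorm_le ysb (fnorm_ge0 xsb)) => h hc hn /=.
    have [C HC] := cont_bnd cS hc.
    apply: le_trans (fnorm_bound xsb (resc h hc) (fun k => HC (proj1_sig k))) _.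
    by rewrite -[leRHS]mulr1; apply: ler_wpM2l; [exact: (fnorm_ge0 xsb) | exact: (le_trans (resn h hc) hn)].
  apply: (fnorm_le xsb (fnorm_ge0 ysb)) => f fc fn.
  have <- : xs (res (T f)) = xs f by rewrite resT.
  have Tn : supnorm (T f) <= 1 by rewrite Tnorm.
  exact: (fnorm_ub ysb (Tc f fc) Tn).
move=> zs zsb zT zn.
have vanish : forall k, continuous k -> (forall s, K s -> k s = 0) -> zs k = 0.
  move=> k kc k0.
  apply/eqP; apply/negPn/negP => nz.
  set δ := `|zs k|.
  have δ0 : 0 < δ by rewrite normr_gt0.
  set N := fnorm zs.
  have N0 : 0 <= N := fnorm_ge0 zsb.
  pose ε := δ / (2 * (N + 1)).
  have ε0 : 0 < ε by rewrite /ε divr_gt0 // mulr_gt0 //; lra.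
  have Nε : N * ε < δ / 2.
    rewrite /ε eps_id //.
    rewrite -[ltRHS]mulr1 ltr_pM2l; last lra.
    rewrite ltr_pdivrMr; lra.
  pose cl (x : R) := (`|x + ε| - `|x - ε|) / 2.
  have clf x := clamp_facts x ε0.
  pose ke (s : S) := k s - cl (k s).
  have clc : continuous (fun s => cl (k s)).
    rewrite /cl; apply: cM; last exact: cC.
    apply: cB; apply: cN; [apply: cD | apply: cB] => //; exact: cC.
  have kec : continuous ke := cB kc clc.
  have clb s : `|cl (k s)| <= ε by case: (clf (k s)).
  have split_k : zs k = zs ke + zs (fun s => cl (k s)).
    rewrite -(phiD zsb kec clc); congr zs; apply/funext => s.
    by rewrite /ke subrK.
  have zcl : `|zs (fun s => cl (k s))| <= N * ε.
    apply: le_trans (fnorm_bound zsb clc clb) _.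
    apply: ler_wpM2l => //; apply: supnorm_le => //; exact: ltW.
  have zke : δ / 2 < `|zs ke|.
    have := ler_normD (zs ke) (zs (fun s => cl (k s))).
    rewrite -split_k -/δ => h1; lra.
  pose F (s : S) := `|g0 s| + (`|ε - `|k s| | + (ε - `|k s|)).
  have Fpos s : 0 < F s.
    rewrite /F; have [hk|hk] := ltP `|k s| ε.
      rewrite (@gtr0_norm _ (ε - `|k s|)); last lra.
      have := normr_ge0 (g0 s); lra.
    have g0nz : g0 s != 0.
      apply/eqP => g00.
      have Ks : K s by rewrite Kg /=.
      by move: hk; rewrite k0 // normr0 leNgt ε0.
    rewrite (@ler0_norm _ (ε - `|k s|)); last lra.
    have := normr_gt0 (g0 s); rewrite g0nz => /= h1; lra.
  have Fc : continuous F.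
    apply: cD; first exact: cN.
    apply: cD; [apply: cN|]; apply: cB; first [exact: cC | exact: cN].
  have Fnz : forall s, F s != 0 by move=> s; rewrite gt_eqF //; exact: Fpos.
  have [C HC] := cont_bnd cS (cV Fnz Fc).
  pose η := (`|C| + 1)^-1.
  have η0 : 0 < η by rewrite /η invr_gt0; have := normr_ge0 C; lra.
  have gη s : ε <= `|k s| -> η <= `|g0 s|.
    move=> hk.
    have Fe : F s = `|g0 s| by rewrite /F (@ler0_norm _ (ε - `|k s|)); lra.
    rewrite -Fe /η -(invrK (F s)) lef_pV2 ?posrE ?invr_gt0 //; last first.
    apply: le_trans (ler_norm _) _; apply: le_trans (HC s) _.
    have := ler_norm C; lra.
  pose θ := 1 - (1 + η)^-1.
  have θ0 : 0 < θ by rewrite /θ subr_gt0 invf_lt1; lra.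
  have phiη s : ε <= `|k s| -> phi s <= 1 - θ.
    move=> hk; rewrite /θ opprB addrC subrK /phi lef_pV2 ?posrE //; last lra.
    by have := gη s hk; lra.
  set Mk := supnorm k.
  have Mk0 : 0 <= Mk := supnorm_ge0 k.
  have [Ck HCk] := cont_bnd cS kc.
  pose t := θ / (Mk + 1).
  have t0 : 0 < t by rewrite /t divr_gt0 //; lra.
  have tMk : t * Mk <= θ.
    rewrite /t mulrAC ler_pdivrMr; last lra.
    rewrite ler_pM2l //; lra.
  have e0 : 0 < t * (δ / 2) by rewrite mulr_gt0 //; lra.
  have [f [fc fn hf]] := fnorm_approx xsb e0.
  pose a : R := if 0 <= xs f then 1 else -1.
  have ha : a * xs f = `|xs f|.
    by rewrite /a; case: ifP => h1; [rewrite mul1r ger0_norm | rewrite mulN1r ltr0_norm // ltNge h1].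
  have na : `|a| = 1 by rewrite /a; case: ifP => _; rewrite ?normrN normr1.
  pose b : R := if 0 <= zs ke then 1 else -1.
  have hb : b * zs ke = `|zs ke|.
    by rewrite /b; case: ifP => h1; [rewrite mul1r ger0_norm | rewrite mulN1r ltr0_norm // ltNge h1].
  have nb : `|b| = 1 by rewrite /b; case: ifP => _; rewrite ?normrN normr1.
  pose w (s : S) := a * T f s + (b * t) * ke s.
  have wc : continuous w := cD (cZ (Tc f fc)) (cZ kec).
  have zw : zs w = `|xs f| + t * `|zs ke|.
    rewrite /w (phi_lin zsb a (Tc f fc) (cZ kec)) (phiZ zsb (b * t) kec).
    by rewrite (zT f fc) ha -mulrA (mulrC t) mulrA hb mulrC.
  have wn : supnorm w <= 1.
    apply: supnorm_le => // s.
    apply: le_trans (ler_normD _ _) _.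
    have e1 : `|a * T f s| = `|T f s| by rewrite normrM na mul1r.
    have e2 : `|b * t * ke s| = t * `|ke s|.
      by rewrite -mulrA normrM nb mul1r normrM (gtr0_norm t0).
    rewrite e1 e2.
    have hT : `|T f s| <= phi s.
      apply: le_trans (Tabs f s fc) _.
      by rewrite -[leRHS]mul1r; apply: ler_wpM2r.
    have [hk|hk] := leP `|k s| ε.
      have -> : ke s = 0 by rewrite /ke; case: (clf (k s)) => _ ->.
      by rewrite normr0 mulr0 addr0; apply: le_trans hT _.
    have hke : `|ke s| <= Mk.
      apply: le_trans (supnorm_ge s HCk); rewrite /ke; by case: (clf (k s)).
    have := phiη s (ltW hk).
    have : t * `|ke s| <= t * Mk by apply: ler_wpM2l => //; exact: ltW.
    lra.
  have zwb : `|zs w| <= N.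
    have [Cw HCw] := cont_bnd cS wc.
    apply: le_trans (fnorm_bound zsb wc HCw) _.
    by rewrite -[leRHS]mulr1; apply: ler_wpM2l.
  have : t * (δ / 2) < t * `|zs ke| by rewrite ltr_pM2l.
  have := ler_norm (zs w).
  move: zwb hf; rewrite zw -zn -/N.
  lra.
move=> h hc.
pose u := res h. have uc := resc h hc.
pose k s := h s - T u s.
have kc : continuous k := cB hc (Tc u uc).
have k0 : forall s, K s -> k s = 0.
  move=> s Ks; rewrite /k.
  have := TK u (exist _ s Ks); rewrite /= /u /res /= => ->.
  by rewrite subrr.
transitivity (zs (fun s => T u s + k s)).
  by congr zs; apply/funext => s; rewrite /k addrC subrK.
rewrite (phiD zsb (Tc u uc) kc) (vanish k kc k0) addr0.
exact: (zT u uc).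
Qed.
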